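(* For integers $i\ge0$, $j\ge0$ and real $k$: (a) $b_{i,j+1,k}=\sum_{r=0}^{i-1}\binom{i}{r}b_{r,j,k}$; (b) $b_{i,j,k+1}=\sum_{r=0}^{i}\binom{i}{r}b_{r,j,k}$; (c) $b_{i+1,j+1,k}=(j+1)\sum_{r=0}^{i}\binom{i}{r}b_{r,j,k}+k\,b_{i,j+1,k}$; (d) $b_{i+1,j+1,k}=(j+1)\sum_{r=j}^{i}b_{r,j,k}\,(j+k+1)^{i-r}$; (e) $b_{i+1,j+1,k}=(j+1)\sum_{r=j}^{i}b_{r,j,k+1}\,k^{i-r}$.
   Context: For integers $i\ge0$, $j\ge0$ and real $k$, $b_{i,j,k}=\sum_{r=0}^{j}\binom{j}{r}(-1)^{j-r}(r+k)^i$, with the convention $0^0=1$ (used throughout, also in the powers appearing in (d) and (e)). *)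

(* Defs.v *)
From mathcomp Require Import all_boot all_order all_algebra.
From mathcomp Require Import reals.
Set Implicit Arguments. Unset Strict Implicit. Unset Printing Implicit Defensive.
Import Order.TTheory GRing.Theory Num.Theory.
Local Open Scope ring_scope.

(* b_{i,j,k} = sum_{r=0}^{j} C(j,r) (-1)^(j-r) (r+k)^i.
   The convention 0^0 = 1 is built in: x ^+ 0 = 1 for every x. *)
Definition b (R : realType) (i j : nat) (k : R) : R :=
  \sum_(0 <= r < j.+1) ('C(j, r))%:R * (-1) ^+ (j - r) * (r%:R + k) ^+ i.

(* Main.v *)
Require Import Defs.
From mathcomp Require Import all_boot all_order all_algebra.
From mathcomp Require Import reals ring lra.
Import Order.TTheory GRing.Theory Num.Theory.
Local Open Scope ring_scope.

Section S.
Variable R : realType.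
Implicit Types (k : R).

Lemma bE_ext i j k N : (j < N)%N ->
  b i j k = \sum_(0 <= r < N) ('C(j, r))%:R * (-1) ^+ (j - r) * (r%:R + k) ^+ i :> R.
Proof.
move=> hN; rewrite /b (@big_cat_nat _ _ _ j.+1 0 N) //.
rewrite [X in _ = _ + X]big1_seq ?addr0 //.
move=> r; rewrite mem_index_iota => /andP[_ /andP[hr _]].
by rewrite (bin_small hr) !mul0r.
Qed.

Lemma b_shift i j k : b i j.+1 k = b i j (k + 1) - b i j k.
Proof.
rewrite /b big_nat_recl // bin0 mul1r.
under eq_big_nat => r _.
  rewrite binS natrD !mulrDl subSS.
  over.
rewrite big_split /=.
have -> : \sum_(0 <= r < j.+1) ('C(j, r))%:R * (-1) ^+ (j - r) * (r.+1%:R + k) ^+ i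
   = \sum_(0 <= r < j.+1) ('C(j, r))%:R * (-1) ^+ (j - r) * (r%:R + (k + 1)) ^+ i.
  by apply: eq_big_nat => r _; rewrite -addn1 natrD addrAC addrA.
rewrite [X in _ = _ - X]big_nat_recl // bin0 mul1r subn0.
have -> : \sum_(0 <= r < j) ('C(j, r.+1))%:R * (-1) ^+ (j - r.+1) * (r.+1%:R + k) ^+ i
   = - \sum_(0 <= r < j.+1) ('C(j, r.+1))%:R * (-1) ^+ (j - r) * (r.+1%:R + k) ^+ i.
  rewrite big_nat_recr //= bin_small // mul0r mul0r addr0 -sumrN.
  apply: eq_big_nat => r /andP[_ hr].
  by rewrite -(subnSK hr) exprS mulN1r !mulrN mulNr opprK.
rewrite subn0 exprS mulN1r.
set A := \sum_(0 <= r < j.+1) _.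
set B := \sum_(0 <= r < j.+1) _.
rewrite mulNr; ring.
Qed.

Lemma b_succ i j k : b i j (k + 1) = \sum_(0 <= r < i.+1) ('C(i, r))%:R * b r j k.
Proof.
rewrite /b !big_mkord.
under eq_bigr => r _ do rewrite addrA exprD1n mulr_sumr.
rewrite /= exchange_big; apply: eq_bigr => t _.
rewrite big_mkord mulr_sumr; apply: eq_bigr => r _.
rewrite -mulr_natl; ring.
Qed.

Lemma b_a i j k : b i j.+1 k = \sum_(0 <= r < i) ('C(i, r))%:R * b r j k.
Proof.
by rewrite b_shift b_succ big_nat_recr //= binn mul1r addrK.
Qed.

Lemma b_c i j k : b i.+1 j.+1 k = (j.+1)%:R * b i j (k + 1) + k * b i j.+1 k.
Proof.
rewrite /b [in RHS]mulr_sumr [in RHS]mulr_sumr.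
have E : forall r : nat, ('C(j.+1, r))%:R * (-1) ^+ (j.+1 - r) * (r%:R + k) ^+ i.+1
   = ('C(j.+1, r))%:R * (-1) ^+ (j.+1 - r) * (r%:R * (r%:R + k) ^+ i)
     + k * (('C(j.+1, r))%:R * (-1) ^+ (j.+1 - r) * (r%:R + k) ^+ i) :> R.
  by move=> r; rewrite exprSr; ring.
under eq_big_nat => r _ do rewrite E.
rewrite big_split /=; congr (_ + _).
rewrite big_nat_recl // mul0r mulr0 add0r.
apply: eq_big_nat => r _.
rewrite subSS.
have := mul_bin_diag j.+1 r => /= /(congr1 (fun n => n%:R : R)).
rewrite !natrM => H.
have Hr : (r.+1)%:R = r%:R + 1 :> R by rewrite -addn1 natrD.
transitivity (((r.+1)%:R * ('C(j.+1, r.+1))%:R) * (-1) ^+ (j - r) * (r%:R + (k + 1)) ^+ i).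
  rewrite {2}Hr -(addrA _ 1 k) (addrC 1 k).
  set s := (-1) ^+ _; set P := (_ + _) ^+ i; ring.
rewrite -H; set s := (-1) ^+ _; set P := (_ + _) ^+ i; ring.
Qed.

Lemma b_van j : forall r k, (r < j)%N -> b r j k = 0.
Proof.
elim: j => [|j IH] r k //= hr.
rewrite b_a big1_seq // => s /andP[_]; rewrite mem_index_iota => /andP[_ hs].
by rewrite IH ?mulr0 //; apply: leq_trans hs _.
Qed.

Lemma b_0 j k : b 0 j.+1 k = 0.
Proof. by rewrite b_a big_geq. Qed.

Lemma unroll (f B : nat -> R) (c a : R) : B 0%N = 0 ->
  (forall n, B n.+1 = c * f n + a * B n) ->
  forall n, B n.+1 = c * \sum_(0 <= r < n.+1) f r * a ^+ (n - r).
Proof.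
move=> B0 HB; elim=> [|n IH].
  by rewrite HB B0 big_nat1 subnn expr0 mulr1 mulr0 addr0.
rewrite HB IH addrC [in RHS]big_nat_recr //= subnn expr0 mulr1 mulrDr; congr (_ + _).
rewrite mulrCA; congr (_ * _); rewrite mulr_sumr; apply: eq_big_nat => r /andP[_ hr].
by rewrite subSn // exprS; ring.
Qed.

Lemma trim (F : nat -> R) j n : (forall r, (r < j)%N -> F r = 0) ->
  \sum_(0 <= r < n) F r = \sum_(j <= r < n) F r.
Proof.
move=> HF; case: (leqP j n) => hjn.
  rewrite (@big_cat_nat _ _ _ j 0 n) //=.
  have -> : \sum_(0 <= r < j) F r = 0.
    apply: big1_seq => r /andP[_].
    by rewrite mem_index_iota => /andP[_ hr]; apply: HF.
  by rewrite add0r.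
rewrite (@big_geq _ _ _ j n) ?(ltnW hjn) // big1_seq // => r /andP[_].
rewrite mem_index_iota => /andP[_ hr]; apply: HF; exact: ltn_trans hr hjn.
Qed.
End S.

Theorem mainTheorem7 (R : realType) (i j : nat) (k : R) :
  [/\ b i j.+1 k = \sum_(0 <= r < i) ('C(i, r))%:R * b r j k
        :> R,
      b i j (k + 1) = \sum_(0 <= r < i.+1) ('C(i, r))%:R * b r j k,
      b i.+1 j.+1 k = (j.+1)%:R * (\sum_(0 <= r < i.+1) ('C(i, r))%:R * b r j k)
                      + k * b i j.+1 k,
      b i.+1 j.+1 k = (j.+1)%:R *
                      (\sum_(j <= r < i.+1) b r j k * ((j.+1)%:R + k) ^+ (i - r))
    & b i.+1 j.+1 k = (j.+1)%:R *
                      (\sum_(j <= r < i.+1) b r j (k + 1) * k ^+ (i - r))].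
Proof.
split; first exact: b_a; first exact: b_succ.
- by rewrite b_c b_succ.
- rewrite -trim; last by move=> r hr; rewrite b_van ?mul0r.
  apply: (unroll R (fun r => b r j k) (fun n => b n j.+1 k) ((j.+1)%:R) ((j.+1)%:R + k) _ _ i) => [|n].
    exact: b_0.
  rewrite b_c (b_shift R n j k) -addn1 natrD.
  have -> : b n j (k + 1) = (b n j (k + 1) - b n j k) + b n j k by rewrite subrK.
  set x := b n j (k + 1) - b n j k; set y := b n j k; ring.
- rewrite -trim; last by move=> r hr; rewrite b_van ?mul0r.
  apply: (unroll R (fun r => b r j (k + 1)) (fun n => b n j.+1 k) ((j.+1)%:R) k _ _ i) => [|n].
    exact: b_0.
  exact: b_c.
Qed.
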